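(* Let $(A,\gamma)$ be a divided power algebra over a field $\mathbb F$. For ${\underline r}\in\mathrm{Comp}_p(n)$ and $h\in\mathscr C_{\underline r}$ set $\phi_{h,{\underline r}}(a_1,\dots,a_p)=\prod_{i=1}^p\gamma_{r_i}(a_i)$, the product taken in the commutative algebra $A$ and factors with $r_i=0$ omitted. Then $(A,\phi)$ is a step algebra (i.e. a $\Gamma(Lev)$-algebra, induced via the operad morphism $Lev\to Com$).
   Context: A divided power algebra is an associative commutative $\mathbb F$-algebra $A$ with maps $\gamma_n:A\to A$, $n\in\mathbb N$, such that (C1) $\gamma_n(\lambda a)=\lambda^n\gamma_n(a)$; (C2) $\gamma_m(a)\gamma_n(a)=\binom{m+n}{m}\gamma_{m+n}(a)$; (C3) $\gamma_n(a+b)=\gamma_n(a)+\sum_{l=1}^{n-1}\gamma_l(a)\gamma_{n-l}(b)+\gamma_n(b)$; (C4) $\gamma_1(a)=a$; (C5) $\gamma_n(ab)=n!\gamma_n(a)\gamma_n(b)=a^n\gamma_n(b)=\gamma_n(a)b^n$; (C6) $\gamma_m(\gamma_n(a))=\frac{(mn)!}{m!(n!)^m}\gamma_{mn}(a)$. $[n]=\{1,\dots,n\}$. $\mathscr L'(n)$ ($n\ge1$): maps $h:[n]\to\mathbb N$ with $\sum_i2^{-h(i)}=1$, $\sigma\cdot h=h\circ\sigma^{-1}$, unit $1\mapsto0$ in $\mathscr L'(1)$, full composition $\mu(h\otimes g_1\otimes\dots\otimes g_n)$ sending $m_1+\dots+m_{j-1}+t$ to $h(j)+g_j(t)$; $Lev$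 is the linear operad spanned by it. Compositions ${\underline r}\in\mathrm{Comp}_p(n)$ (nonnegative, sum $n$) are identified with partitions of $[n]$ into consecutive intervals ${\underline r}_i$; $\mathscr C_R$ is the set of $h\in\mathscr L'(n)$ constant on the parts of an ordered partition $R$. For $\rho\in\Sigma_p$: ${\underline r}^\rho=(r_{\rho^{-1}(i)})_i$, $\rho^*$ the associated block permutation. ${\underline r}\circ_1(l,m)=(l,m,r_2,\dots,r_p)$. $\gamma_k(Q)=(\bigsqcup_{t=0}^{k-1}(Q_j+tm))_j$; $R\otimes Q=(R_1,\dots,R_p,Q_1+n,\dots)$; ${\underline r}\diamond({\underline q}_i)_i=\gamma_{r_1}({\underline q}_1)\otimes\dots\otimes\gamma_{r_p}({\underline q}_p)$. A step algebra $(A,\phi)$: operations $\phi_{h,{\underline r}}:A^{\times p}\to A$ for $h\in\mathscr C_{\underline r}$ (with $\phi_{h,R}:=\phi_{\tau\cdot h,{\underline r}}$ when $\tau(R_i)={\underline r}_i$) satisfying (S1) $\phi_{\rho^*\cdot h,{\underline r}^\rho}(a_{\rho^{-1}(1)},\dots,a_{\rho^{-1}(p)})=\phi_{h,{\underline r}}(a_1,\dots,a_p)$; (S2) $\phi_{h,(0,{\underline r})}(a_0,a_1,\dots)=\phi_{h,{\underline r}}(a_1,\dots)$; (S3) $\phi_{h,{\underline r}}(\lambda a_1,\dots)=\lambda^{r_1}\phi_{h,{\underline r}}(a_1,\dots)$; (S4) $\binom{r_1}{l}\phi_{h,{\underline r}}(a_1,\dots,a_p)=\phi_{h,{\underline r}\circ_1(l,m)}(a_1,a_1,a_2,\dots,a_p)$;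 (S5) $\phi_{h,{\underline r}}(a+b,a_2,\dots)=\sum_{l+m=r_1}\phi_{h,{\underline r}\circ_1(l,m)}(a,b,a_2,\dots)$; (S6) $\phi_{1,(1)}(a)=a$; (S7) $\phi_{h,{\underline r}}((\phi_{g_i,{\underline q}_i}(a_{ij})_j)_i)=\big(\prod_i\frac{1}{r_i!}\prod_j\frac{(r_iq_{ij})!}{(q_{ij}!)^{r_i}}\big)\phi_{\mu(h\otimes g_1^{\otimes r_1}\otimes\dots\otimes g_p^{\otimes r_p}),{\underline r}\diamond({\underline q}_i)_i}((a_{ij})_{i,j})$ for ${\underline q}_i\in\mathrm{Comp}_{k_i}(m_i)$, $g_i\in\mathscr C_{{\underline q}_i}$. *)

(* Defs.v *)
From HB Require Import structures.
From mathcomp Require Import all_boot all_order all_algebra.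
Set Implicit Arguments. Unset Strict Implicit. Unset Printing Implicit Defensive.
Import Order.TTheory GRing.Theory Num.Theory.
Local Open Scope ring_scope.

(* h : [n] -> N is encoded as the list (h 0, ..., h (n-1)). *)
Definition Lprime (n : nat) (h : seq nat) : Prop :=
  size h = n /\ \sum_(x <- h) ((2%:R : rat)^-1) ^+ x = 1.

(* a composition r = (r_1,..,r_p) of n is a seq nat with size p and sumn n;
   its i-th interval (0-based) is {r_0+..+r_{i-1}, ..., r_0+..+r_i - 1}. *)
Definition ivs (r : seq nat) : seq (seq nat) :=
  [seq iota (sumn (take i r)) (nth 0%N r i) | i <- iota 0 (size r)].

(* ordered partitions are lists of blocks *)
Definition constant_on (R : seq (seq nat)) (h : seq nat) : Prop :=
  forall B, B \in R -> forall x y, x \in B -> y \in B -> nth 0%N h x = nth 0%N h y.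

Definition C_ (r : seq nat) (h : seq nat) : Prop :=
  Lprime (sumn r) h /\ constant_on (ivs r) h.

(* tau . h = h o tau^-1 where tau^-1 lists the blocks of R one after another,
   so that tau(R_i) = i-th interval of (|R_1|,..,|R_p|). *)
Definition transport (h : seq nat) (R : seq (seq nat)) : seq nat :=
  map (nth 0%N h) (flatten R).

(* gamma_k(Q) for the partition of [m] into the intervals of q, m = sumn q *)
Definition gamma_part (k : nat) (q : seq nat) : seq (seq nat) :=
  [seq flatten [seq map (addn (t * sumn q)%N) B | t <- iota 0 k] | B <- ivs q].

Definition tensor (R Q : seq (seq nat)) : seq (seq nat) :=
  R ++ map (map (addn (sumn (map size R)))) Q.

Definition diamond (r : seq nat) (qs : seq (seq nat)) : seq (seq nat) :=
  foldl tensor [::] [seq gamma_part pr.1 pr.2 | pr <- zip r qs].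

(* full operadic composition mu(h (x) g_1 (x) ... (x) g_n) in L' *)
Definition mu (h : seq nat) (gs : seq (seq nat)) : seq nat :=
  flatten [seq map (addn pr.1) pr.2 | pr <- zip h gs].

Definition s7coef (r : seq nat) (qs : seq (seq nat)) : nat :=
  (\prod_(pr <- zip r qs)
     ((\prod_(q <- pr.2) (pr.1 * q)`!) %/ (pr.1`! * \prod_(q <- pr.2) (q`! ^ pr.1))))%N.

Section Alg.
Variable F : fieldType.
Variable A : lmodType F.

(* associative commutative (not necessarily unital) F-algebra structure on A *)
Definition comm_assoc_alg (mul : A -> A -> A) : Prop :=
  [/\ forall a b c, mul (mul a b) c = mul a (mul b c),
      forall a b, mul a b = mul b a,
      forall a b c, mul (a + b) c = mul a c + mul b c &
      forall (l : F) a b, mul (l *: a) b = l *: mul a b].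

(* n-th power a^n = a * ... * a (n >= 1 factors) *)
Definition npow (mul : A -> A -> A) (a : A) (n : nat) : A := iter n.-1 (mul a) a.

(* divided power structure; gamma_n is only constrained for n >= 1 *)
Definition divided_power_alg (mul : A -> A -> A) (gam : nat -> A -> A) : Prop :=
  [/\ forall n (l : F) a, (0 < n)%N -> gam n (l *: a) = l ^+ n *: gam n a,
      forall m n a, (0 < m)%N -> (0 < n)%N ->
                 mul (gam m a) (gam n a) = gam (m + n)%N a *+ 'C(m + n, m),
      forall n a b, (0 < n)%N ->
                 gam n (a + b) = gam n a + \sum_(1 <= l < n) mul (gam l a) (gam (n - l)%N b)
                                 + gam n b,
      forall a, gam 1%N a = a &
      (forall n a b, (0 < n)%N ->
                 [/\ gam n (mul a b) = mul (gam n a) (gam n b) *+ n`!,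
                     gam n (mul a b) = mul (npow mul a n) (gam n b) &
                     gam n (mul a b) = mul (gam n a) (npow mul b n)]) /\
      forall m n a, (0 < m)%N -> (0 < n)%N ->
                 gam m (gam n a) = gam (m * n)%N a *+ ((m * n)`! %/ (m`! * n`! ^ m))%N].

(* step algebra: phi h r xs stands for phi_{h,r}(xs) *)
Definition step_algebra (phi : seq nat -> seq nat -> seq A -> A) : Prop :=
  [/\ (* S1 ; s = (rho^-1(1),...,rho^-1(p)) *)
      forall r h s xs, C_ r h -> size xs = size r -> perm_eq s (iota 0 (size r)) ->
        phi (map (nth 0%N h) (flatten [seq nth [::] (ivs r) i | i <- s]))
            [seq nth 0%N r i | i <- s] [seq nth 0 xs i | i <- s] = phi h r xs,
      forall r h a0 xs, C_ (0%N :: r) h -> size xs = size r ->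
        phi h (0%N :: r) (a0 :: xs) = phi h r xs,
      forall r1 r h (l : F) a xs, C_ (r1 :: r) h -> size xs = size r ->
        phi h (r1 :: r) (l *: a :: xs) = l ^+ r1 *: phi h (r1 :: r) (a :: xs),
      forall r1 r l m h a xs, (l + m)%N = r1 -> C_ (r1 :: r) h -> size xs = size r ->
        phi h (r1 :: r) (a :: xs) *+ 'C(r1, l) = phi h (l :: m :: r) (a :: a :: xs) &
      (forall r1 r h a b xs, C_ (r1 :: r) h -> size xs = size r ->
        phi h (r1 :: r) (a + b :: xs) = \sum_(l < r1.+1) phi h (val l :: (r1 - l)%N :: r) (a :: b :: xs)) /\
      (forall a, phi [:: 0%N] [:: 1%N] [:: a] = a) /\
      forall r h qs gs xss, C_ r h ->
        size qs = size r -> size gs = size r -> size xss = size r ->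
        (forall i, (i < size r)%N ->
            C_ (nth [::] qs i) (nth [::] gs i) /\ size (nth [::] xss i) = size (nth [::] qs i)) ->
        phi h r [seq phi (nth [::] gs i) (nth [::] qs i) (nth [::] xss i) | i <- iota 0 (size r)]
        = (let R := diamond r qs in
           let g := mu h (flatten [seq nseq (nth 0%N r i) (nth [::] gs i) | i <- iota 0 (size r)]) in
           phi (transport g R) (map size R) (flatten xss)) *+ s7coef r qs].

(* non-unital product of a list (0 for the empty list, which never occurs for n >= 1) *)
Definition nprod (mul : A -> A -> A) (s : seq A) : A :=
  if s is x :: s' then foldl mul x s' else 0.

Definition phi_gamma (mul : A -> A -> A) (gam : nat -> A -> A) (r : seq nat) (xs : seq A) : A :=
  nprod mul [seq gam pr.1 pr.2 | pr <- zip r xs & pr.1 != 0%N].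

End Alg.

(* Main.v *)
Require Import Defs.
From HB Require Import structures.
From mathcomp Require Import all_boot all_order all_algebra ring.
Set Implicit Arguments. Unset Strict Implicit. Unset Printing Implicit Defensive.
Import Order.TTheory GRing.Theory Num.Theory.
Local Open Scope ring_scope.

Lemma mulA_ (F : fieldType) (A : lmodType F) (mul : A -> A -> A) :
  comm_assoc_alg mul -> associative mul.
Proof. by case=> H _ _ _ a b c; rewrite H. Qed.
Lemma mulC_ (F : fieldType) (A : lmodType F) (mul : A -> A -> A) :
  comm_assoc_alg mul -> commutative mul.
Proof. by case. Qed.

Lemma mulZl_ (F : fieldType) (A : lmodType F) (mul : A -> A -> A) :
  comm_assoc_alg mul -> forall l a b, mul (l *: a) b = l *: mul a b.
Proof. by case. Qed.
Lemma mulDl_ (F : fieldType) (A : lmodType F) (mul : A -> A -> A) :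
  comm_assoc_alg mul -> forall a b c, mul (a + b) c = mul a c + mul b c.
Proof. by case. Qed.
Lemma mulnl_ (F : fieldType) (A : lmodType F) (mul : A -> A -> A) :
  comm_assoc_alg mul -> forall n a b, mul (a *+ n) b = mul a b *+ n.
Proof. by move=> H n a b; rewrite -!scaler_nat mulZl_. Qed.
Lemma mulnr_ (F : fieldType) (A : lmodType F) (mul : A -> A -> A) :
  comm_assoc_alg mul -> forall n a b, mul a (b *+ n) = mul a b *+ n.
Proof. by move=> H n a b; rewrite (mulC_ H) mulnl_ // (mulC_ H). Qed.
Lemma mul0l_ (F : fieldType) (A : lmodType F) (mul : A -> A -> A) :
  comm_assoc_alg mul -> forall b, mul 0 b = 0.
Proof. by move=> H b; have := mulnl_ H 0 0 b; rewrite !mulr0n. Qed.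

Lemma foldlZ (F : fieldType) (A : lmodType F) (mul : A -> A -> A) :
  comm_assoc_alg mul -> forall s l x, foldl mul (l *: x) s = l *: foldl mul x s.
Proof. by move=> H; elim=> //= y s IH l x; rewrite mulZl_ // IH. Qed.
Lemma foldln (F : fieldType) (A : lmodType F) (mul : A -> A -> A) :
  comm_assoc_alg mul -> forall s n x, foldl mul (x *+ n) s = foldl mul x s *+ n.
Proof. by move=> H s n x; rewrite -!scaler_nat foldlZ. Qed.
Lemma foldl0 (F : fieldType) (A : lmodType F) (mul : A -> A -> A) :
  comm_assoc_alg mul -> forall s, foldl mul 0 s = 0.
Proof. by move=> H s; have := foldln H s 0 0; rewrite !mulr0n. Qed.
Lemma foldlD (F : fieldType) (A : lmodType F) (mul : A -> A -> A) :
  comm_assoc_alg mul -> forall s x y, foldl mul (x + y) s = foldl mul x s + foldl mul y s.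
Proof. by move=> H; elim=> //= z s IH x y; rewrite mulDl_ // IH. Qed.
Lemma foldl_sum (F : fieldType) (A : lmodType F) (mul : A -> A -> A) :
  comm_assoc_alg mul -> forall s (I : Type) (r : seq I) (P : pred I) (f : I -> A),
  foldl mul (\sum_(i <- r | P i) f i) s = \sum_(i <- r | P i) foldl mul (f i) s.
Proof.
move=> H s I r P f; apply: (big_morph (fun x => foldl mul x s)).
  exact: foldlD. exact: foldl0.
Qed.

Definition OP (F : fieldType) (A : lmodType F) (mul : A -> A -> A) (H : comm_assoc_alg mul)
  (s : seq A) : option A := \big[oAC (mulA_ H) (mulC_ H)/None]_(x <- s) Some x.

Lemma OP_cons (F : fieldType) (A : lmodType F) (mul : A -> A -> A) (H : comm_assoc_alg mul) x s :
  OP H (x :: s) = Some (foldl mul x s).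
Proof.
rewrite /OP big_cons; elim: s x => [|y s IH] x; first by rewrite big_nil.
by rewrite big_cons Monoid.mulmA; exact: IH.
Qed.
Local Notation opH H := (oAC (mulA_ H) (mulC_ H)).

Lemma nprodE (F : fieldType) (A : lmodType F) (mul : A -> A -> A) (H : comm_assoc_alg mul) s :
  nprod mul s = odflt 0 (OP H s).
Proof. by case: s => [|x s]; rewrite ?OP_cons // /OP big_nil. Qed.

Lemma phiE (F : fieldType) (A : lmodType F) (mul : A -> A -> A) (H : comm_assoc_alg mul) gam r xs :
  phi_gamma mul gam r xs =
  odflt 0 (\big[opH H/None]_(pr <- zip r xs | pr.1 != 0%N) Some (gam pr.1 pr.2)).
Proof. by rewrite /phi_gamma (nprodE H) /OP big_map big_filter. Qed.

Lemma zip_nth (S T : Type) (x0 : S) (y0 : T) s t : size s = size t ->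
  zip s t = [seq (nth x0 s i, nth y0 t i) | i <- iota 0 (size s)].
Proof.
move=> st; rewrite -[zip s t](mkseq_nth (x0, y0)) size_zip st minnn.
by apply: eq_map => i; rewrite nth_zip.
Qed.


Lemma big_scale (F : fieldType) (A : lmodType F) (mul : A -> A -> A) (H : comm_assoc_alg mul)
  (I : eqType) (t : seq I) (P : pred I) (f : I -> A) (c : I -> nat) :
  \big[opH H/None]_(i <- t | P i) Some (f i *+ c i) =
  omap (fun a => a *+ \prod_(i <- t | P i) c i) (\big[opH H/None]_(i <- t | P i) Some (f i)).
Proof.
elim: t => [|i t IH]; first by rewrite !big_nil.
rewrite !big_cons; case: (P i) => //; rewrite IH.
case E: (\big[opH H/None]_(i <- t | P i) Some (f i)) => [y|] /=.
  by rewrite oACE (mulnl_ H) (mulnr_ H) -mulrnA mulnC.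
rewrite [X in _ *+ (_ * X)%N]big1_seq ?muln1 // => j /andP [Pj jt].
move: E; rewrite (big_rem _ jt) /= Pj.
by case: (\big[opH H/None]_(i <- rem j t | P i) Some (f i)).
Qed.

Lemma bigSome (F : fieldType) (A : lmodType F) (mul : A -> A -> A) (H : comm_assoc_alg mul)
  (I : Type) (t : seq I) (P : pred I) (f : I -> A) :
  has P t -> Some (odflt 0 (\big[opH H/None]_(i <- t | P i) Some (f i)))
             = \big[opH H/None]_(i <- t | P i) Some (f i).
Proof.
elim: t => [|i t IH] //=; rewrite big_cons; case: (P i) => /= [_|/IH <-//].
by case: (\big[opH H/None]_(i <- t | P i) Some (f i)).
Qed.

Definition ccoef (r q : nat) : nat := ((r * q)`! %/ (r`! * q`! ^ r))%N.
Definition ecoef (r : nat) (qq : seq nat) : nat :=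
  (r`! ^ (count (fun q => q != 0%N) qq).-1 * \prod_(q <- qq | q != 0%N) ccoef r q)%N.

Lemma has_unzip1 (T : Type) (s : seq (nat * T)) :
  has (fun pr => pr.1 != 0%N) s = has (fun q => q != 0%N) (unzip1 s).
Proof. by rewrite has_map. Qed.

Lemma gam_big (F : fieldType) (A : lmodType F) (mul : A -> A -> A) (gam : nat -> A -> A)
  (H : comm_assoc_alg mul) (HD : divided_power_alg mul gam) r (s : seq (nat * A)) :
  (0 < r)%N -> has (fun pr => pr.1 != 0%N) s ->
  gam r (odflt 0 (\big[opH H/None]_(pr <- s | pr.1 != 0%N) Some (gam pr.1 pr.2))) =
  odflt 0 (\big[opH H/None]_(pr <- s | pr.1 != 0%N) Some (gam (r * pr.1)%N pr.2))
    *+ ecoef r (unzip1 s).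
Proof.
case: HD => C1 C2 C3 C4 [C5 C6] hr.
elim: s => [|[q x] s IH] //=; rewrite !big_cons /=.
case: q => [|q] /= hs.
  by rewrite IH // /ecoef /= big_cons.
have hC6 := C6 r q.+1 x hr isT.
have [hs'|hs'] := boolP (has (fun pr : nat * A => pr.1 != 0%N) s).
  have := bigSome H (fun pr : nat * A => gam pr.1 pr.2) hs'.
  have := bigSome H (fun pr : nat * A => gam (r * pr.1)%N pr.2) hs'.
  move=> <- <-; rewrite oACE oACE /=.
  have [C5a _ _] := C5 r (gam q.+1 x) (odflt 0 (\big[opH H/None]_(i <- s | i.1 != 0%N) Some (gam i.1 i.2))) hr.
  rewrite C5a hC6 IH // (mulnl_ H) (mulnr_ H) -!mulrnA; congr (_ *+ _).
  rewrite /ecoef /= big_cons /= /ccoef.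
  move: hs'; rewrite has_unzip1 has_count; case: count => [|k] //= _.
  by rewrite expnS; ring.
rewrite !big_hasC //= hC6 /ecoef /= big_cons /= big_hasC -?has_unzip1 //.
by move: hs'; rewrite has_unzip1 has_count -eqn0Ngt => /eqP ->; rewrite muln1 mul1n.
Qed.

Lemma fact_dvd r q : (0 < q)%N -> (r`! * q`! ^ r %| (r * q)`!)%N.
Proof.
case: q => [//|q] _; elim: r => [|r IH]; first by rewrite mul0n.
set n := (r.+1 * q.+1)%N.
have hn : (n - q.+1 = r * q.+1)%N by rewrite /n mulSn addKn.
have hb := bin_fact (leq_pmull q.+1 (ltn0Sn r) : (q.+1 <= n)%N).
have hd := mul_bin_diag n q.
have hC : 'C(n, q.+1) = (r.+1 * 'C(n.-1, q))%N.
  apply/eqP; rewrite -(eqn_pmul2l (ltn0Sn q)) -hd /n; apply/eqP; ring.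
rewrite -hb hC hn factS expnS.
have -> : (r.+1 * 'C(n.-1, q) * ((q.+1)`! * (r * q.+1)`!) =
          (r.+1 * (q.+1)`!) * ('C(n.-1, q) * (r * q.+1)`!))%N by ring.
have -> : (r.+1 * r`! * ((q.+1)`! * (q.+1)`! ^ r) = (r.+1 * (q.+1)`!) * (r`! * (q.+1)`! ^ r))%N by ring.
by apply: dvdn_mul => //; apply: dvdn_mull.
Qed.

Lemma prod_nz (f : nat -> nat) (q : seq nat) : f 0%N = 1%N ->
  (\prod_(q0 <- q) f q0 = \prod_(q0 <- q | q0 != 0%N) f q0)%N.
Proof.
move=> f0; rewrite [RHS]big_mkcond /=; apply: eq_bigr => i _.
by case: i => [|i] /=.
Qed.

Lemma ecoefE r q : (0 < r)%N -> has (fun q0 => q0 != 0%N) q ->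
  ecoef r q = ((\prod_(q0 <- q) (r * q0)`!) %/ (r`! * \prod_(q0 <- q) q0`! ^ r))%N.
Proof.
move=> hr hq; rewrite (@prod_nz (fun q0 => (r * q0)`!)) ?muln0 //.
rewrite (@prod_nz (fun q0 => (q0`! ^ r)%N)) ?exp1n //.
have -> : (\prod_(q0 <- q | q0 != 0%N) (r * q0)`! =
   \prod_(q0 <- q | q0 != 0%N) (ccoef r q0 * (r`! * q0`! ^ r)))%N.
  by apply: eq_bigr => q0 hq0; rewrite /ccoef divnK // fact_dvd // lt0n.
rewrite big_split /= big_split /= big_const_seq iter_muln_1 /ecoef.
move: hq; rewrite has_count; case: count => [|k] //= _.
have -> : (\prod_(i <- q | i != 0%N) ccoef r i * (r`! ^ k.+1 * \prod_(i <- q | i != 0%N) i`! ^ r)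
   = (r`! ^ k * \prod_(i <- q | i != 0%N) ccoef r i) * (r`! * \prod_(q0 <- q | q0 != 0%N) q0`! ^ r))%N.
  by rewrite expnS; ring.
rewrite mulnK // muln_gt0 fact_gt0 /=; apply: prodn_gt0 => i; by rewrite expn_gt0 fact_gt0.
Qed.

Lemma s7term0 q : ((\prod_(q0 <- q) (0 * q0)`!) %/ (0`! * \prod_(q0 <- q) q0`! ^ 0))%N = 1%N.
Proof. by rewrite !big1 // => i _; rewrite ?mul0n ?expn0. Qed.

Lemma sumn_const (T : Type) (s : seq T) c : sumn [seq c | _ <- s] = (size s * c)%N.
Proof. by elim: s => //= x s ->; rewrite mulSn. Qed.

Lemma size_gamma_part k q : map size (gamma_part k q) = map (muln k) q.
Proof.
rewrite /gamma_part /ivs -map_comp.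
rewrite -[in RHS](mkseq_nth 0%N q) /mkseq -!map_comp.
apply: eq_map => i /=; rewrite size_flatten /shape -map_comp.
rewrite (@eq_map _ _ _ (fun _ => nth 0%N q i)); last by move=> t /=; rewrite size_map size_iota.
by rewrite sumn_const size_iota.
Qed.

Lemma size_foldl_tensor L R : map size (foldl tensor R L) = map size R ++ flatten (map (map size) L).
Proof.
elim: L R => [|Q L IH] R /=; first by rewrite cats0.
rewrite IH /tensor map_cat -catA; congr (_ ++ (_ ++ _)).
by rewrite -map_comp; apply: eq_map => B /=; rewrite size_map.
Qed.

Lemma size_diamond r qs : size qs = size r ->
  map size (diamond r qs) =
  flatten [seq map (muln (nth 0%N r i)) (nth [::] qs i) | i <- iota 0 (size r)].
Proof.
move=> sq; rewrite /diamond size_foldl_tensor /= -map_comp (zip_nth 0%N [::] (esym sq)) -map_comp.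
by congr flatten; apply: eq_map => i /=; rewrite size_gamma_part.
Qed.

Lemma zip_flatten (S T : Type) (ss : seq (seq S)) (ts : seq (seq T)) :
  map size ss = map size ts ->
  zip (flatten ss) (flatten ts) = flatten [seq zip pr.1 pr.2 | pr <- zip ss ts].
Proof.
elim: ss ts => [|s ss IH] [|t ts] //= [e1 e2].
by rewrite zip_cat // IH.
Qed.

Lemma zip_mapl (S S' T : Type) (f : S -> S') q (xs : seq T) :
  zip (map f q) xs = [seq (f pr.1, pr.2) | pr <- zip q xs].
Proof. by elim: q xs => [|a q IH] [|x xs] //=; rewrite IH. Qed.

Lemma sumn_has q : (0 < sumn q)%N -> has (fun q0 => q0 != 0%N) q.
Proof. by elim: q => [|a q IH] //=; case: a => //= ; rewrite add0n. Qed.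

Lemma C_sumn r h : C_ r h -> (0 < sumn r)%N.
Proof.
case=> [[sh hs] _]; rewrite lt0n; apply/negP => /eqP e.
by move: sh hs; rewrite e => /size0nil ->; rewrite big_nil.
Qed.

Lemma big_flattenH (F : fieldType) (A : lmodType F) (mul : A -> A -> A) (H : comm_assoc_alg mul)
  (I : Type) (rr : seq (seq I)) (P : pred I) (f : I -> option A) :
  \big[opH H/None]_(i <- flatten rr | P i) f i
  = \big[opH H/None]_(s <- rr) \big[opH H/None]_(i <- s | P i) f i.
Proof. exact: big_flatten. Qed.
Theorem proposition6p2 (F : fieldType) (A : lmodType F)
  (mul : A -> A -> A) (gam : nat -> A -> A) :
  comm_assoc_alg mul -> divided_power_alg mul gam ->
  step_algebra (fun (h r : seq nat) (xs : seq A) => phi_gamma mul gam r xs).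
Proof.
move=> H HD; have HD' := HD; case: HD' => C1 C2 C3 C4 [C5 C6].
split.
-
  move=> r h s xs _ sx ps.
  rewrite !(phiE H); congr odflt; apply: perm_big.
  by rewrite (zip_nth 0%N 0 (esym sx)) zip_map (perm_map _ ps).
-
  by move=> r h a0 xs _ _; rewrite /phi_gamma.
-
  move=> [|r1] r h l a xs _ _; rewrite /phi_gamma /=; first by rewrite expr0 scale1r.
  by rewrite C1 // (foldlZ H).
-
  move=> r1 r [|l] [|m] h a xs <- _ _; rewrite /phi_gamma /=.
  + by rewrite bin0.
  + by rewrite bin0 mulr1n.
  + by rewrite addn0 binn mulr1n.
  + by rewrite -(foldln H) C2.
split.
-
  move=> [|r1] r h a b xs _ _; first by rewrite big_ord1 /phi_gamma.
  rewrite -(big_mkord xpredT (fun l => phi_gamma mul gam (l :: (r1.+1 - l)%N :: r) (a :: b :: xs))).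
  rewrite big_nat_recr // big_nat_recl //.
  rewrite {1}/phi_gamma /= C3 // !(foldlD H) (foldl_sum H).
  rewrite subn0 subnn big_add1 /=.
  have -> : \sum_(0 <= i < r1) phi_gamma mul gam [:: i.+1, (r1.+1 - i.+1)%N & r] [:: a, b & xs]
     = \sum_(0 <= i < r1) foldl mul (mul (gam i.+1 a) (gam (r1.+1 - i.+1)%N b))
           [seq gam pr.1 pr.2 | pr <- zip r xs & pr.1 != 0%N].
    apply: eq_big_nat => i /andP [_ lt_i]; rewrite /phi_gamma subSS /=.
    by have -> : (r1 - i != 0)%N by rewrite subn_eq0 -ltnNge.
  rewrite /phi_gamma /=.
  by rewrite [LHS]addrC [X in _ + X = _]addrC addrA.
split.
- by move=> a; rewrite /phi_gamma /= C4.
move=> r h qs gs xss hC sq sg sx hi; cbv zeta.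
set p := size r.
have hi1 : forall i, (i < p)%N -> has (fun q0 => q0 != 0%N) (nth [::] qs i).
  by move=> i /hi [hc _]; apply: sumn_has; apply: C_sumn hc.
have hi2 : forall i, (i < p)%N -> size (nth [::] xss i) = size (nth [::] qs i).
  by move=> i /hi [].
pose G i := \big[opH H/None]_(pr <- zip (nth [::] qs i) (nth [::] xss i) | (nth 0%N r i * pr.1 != 0)%N)
               Some (gam (nth 0%N r i * pr.1)%N pr.2).
rewrite (phiE H).
have -> : zip r [seq phi_gamma mul gam (nth [::] qs i) (nth [::] xss i) | i <- iota 0 p]
   = [seq (nth 0%N r i, phi_gamma mul gam (nth [::] qs i) (nth [::] xss i)) | i <- iota 0 p].
  by rewrite -{1}(mkseq_nth 0%N r) /mkseq zip_map.
rewrite big_map /=.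
have -> : \big[opH H/None]_(i <- iota 0 p | nth 0%N r i != 0%N)
     Some (gam (nth 0%N r i) (phi_gamma mul gam (nth [::] qs i) (nth [::] xss i)))
   = \big[opH H/None]_(i <- iota 0 p | nth 0%N r i != 0%N)
     Some (odflt 0 (G i) *+ ecoef (nth 0%N r i) (nth [::] qs i)).
  rewrite big_seq_cond [RHS]big_seq_cond; apply: eq_bigr => i /andP [].
  rewrite mem_iota add0n => /andP [_ ip] ri.
  rewrite (phiE H) (gam_big H HD) ?lt0n // ?has_unzip1 unzip1_zip ?hi2 ?hi1 //.
  congr (Some (odflt 0 _ *+ _)); apply: eq_bigl => pr; rewrite muln_eq0 negb_or ri //.
rewrite (big_scale H).
have -> : \big[opH H/None]_(i <- iota 0 p | nth 0%N r i != 0%N) Some (odflt 0 (G i))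
   = \big[opH H/None]_(i <- iota 0 p) G i.
  rewrite big_mkcond; apply: eq_big_seq => i; rewrite mem_iota add0n => /andP [_ ip].
  case: eqP => [e|/eqP ri] /=.
    by rewrite /G big_pred0 // => pr; rewrite e mul0n.
  rewrite /G (@eq_bigl _ _ _ _ _ _ (fun pr : nat * A => pr.1 != 0%N)); last first.
    by move=> pr; rewrite muln_eq0 negb_or ri.
  by rewrite (bigSome H) // has_unzip1 unzip1_zip ?hi2 ?hi1.
rewrite size_diamond // -/p.
have -> : flatten xss = flatten [seq nth [::] xss i | i <- iota 0 p].
  by rewrite /p -sx -{1}(mkseq_nth [::] xss).
rewrite (phiE H) zip_flatten; last first.
  rewrite -!map_comp; apply/eq_in_map => i; rewrite mem_iota add0n => /andP [_ ip] /=.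
  by rewrite size_map hi2.
rewrite zip_map (big_flattenH H) !big_map.
have -> : \big[opH H/None]_(j <- iota 0 p)
        \big[opH H/None]_(pr <- zip (map (muln (nth 0%N r j)) (nth [::] qs j)) (nth [::] xss j) | pr.1 != 0%N)
           Some (gam pr.1 pr.2)
     = \big[opH H/None]_(i <- iota 0 p) G i.
  by apply: eq_bigr => i _; rewrite /= zip_mapl big_map.
case: (\big[opH H/None]_(i <- iota 0 p) G i) => [y|] /=; last by rewrite mul0rn.
congr (_ *+ _).
rewrite /s7coef (zip_nth 0%N [::] (esym sq)) big_map big_mkcond /=.
apply: eq_big_seq => i; rewrite mem_iota add0n => /andP [_ ip].
case: eqP => [->|/eqP ri] /=; first by rewrite s7term0.
by rewrite ecoefE ?lt0n ?hi1.
Qed.
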